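(* Let $\{\mathcal{H}^A_j\}_{j=0}^J$ be mutually orthogonal subspaces of $\mathcal{H}^A$ with $d_j=\dim\mathcal{H}^A_j$, and let $\pi^A_j$ be the completely mixed state on $\mathcal{H}^A_j$. Let $\{p_j\}_{j=0}^J$ be a probability distribution and $\rho^{BC}_j$ density operators on $\mathcal{H}^{BC}$. Then $\Lambda^{ABC}=\sum_{j=0}^Jp_j\pi^A_j\otimes\rho^{BC}_j$ satisfies $$2^{-H_{\min}(AB|C)_\Lambda}\le\sum_{j=0}^J\frac{p_j}{d_j}2^{-H_{\min}(B|C)_{\rho_j}}.$$
   Context: For positive semidefinite $\rho^{XY}$, $H_{\min}(X|Y)_\rho=\sup_{\sigma^Y}\sup\{\lambda\in\mathbb{R}:2^{-\lambda}I^X\otimes\sigma^Y-\rho^{XY}\ge0\}$, the outer supremum over density operators $\sigma^Y$. Logarithms are base 2. *)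

(* Defs.v *)
From HB Require Import structures.
From mathcomp Require Import all_boot all_order all_algebra.
From mathcomp Require Import complex mxtens.
From mathcomp Require Import classical_sets reals constructive_ereal ereal exp.

Set Implicit Arguments.
Unset Strict Implicit.
Unset Printing Implicit Defensive.

Import Order.TTheory GRing.Theory Num.Theory.
Local Open Scope ring_scope.

Definition adjmx (R : rcfType) (m n : nat) (M : 'M[R[i]]_(m, n)) : 'M[R[i]]_(n, m) :=
  (map_mx Num.conj M)^T.

Definition psdmx (R : rcfType) (n : nat) (M : 'M[R[i]]_n) : Prop :=
  adjmx M = M /\ forall v : 'rV[R[i]]_n, 0 <= (v *m M *m adjmx v) 0 0.

Definition density (R : rcfType) (n : nat) (M : 'M[R[i]]_n) : Prop :=
  psdmx M /\ \tr M = 1.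

(* conditional min-entropy H_min(X|Y)_rho for rho on H^X (dim m) (x) H^Y (dim n),
   tensor factor ordering as in mxtens (Kronecker product, X first):
   sup over density operators sigma^Y of sup{ lam | 2^-lam I^X (x) sigma^Y - rho >= 0 } *)
Definition Hmin (R : realType) (m n : nat) (rho : 'M[R[i]]_(m * n)) : \bar R :=
  ereal_sup [set ereal_sup
      [set (lam%:E)%E | lam in
        [set lam : R | psdmx (real_complex R (powR 2 (- lam)) *:
                                 ((1%:M : 'M[R[i]]_m) *t sigma) - rho)]]
    | sigma in [set sigma : 'M[R[i]]_n | density sigma]].

Definition exp2neg (R : realType) (x : \bar R) : \bar R :=
  match x with
  | EFin r => (powR 2 (- r))%:E
  | +oo%E => 0%E
  | -oo%E => +oo%E
  end.

Arguments Hmin {R} m%_N n%_N rho.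

(* Main.v *)
Require Import Defs.
From HB Require Import structures.
From mathcomp Require Import all_boot all_order all_algebra.
From mathcomp Require Import complex mxtens.
From mathcomp Require Import classical_sets reals constructive_ereal ereal exp boolp.

Import Order.TTheory GRing.Theory Num.Theory.
Local Open Scope ring_scope.

Section Adj.
Variable R : rcfType.
Local Notation C := (R[i]).

Lemma adjmxE m n (M : 'M[C]_(m,n)) i j : adjmx M i j = (M j i)^*.
Proof. by rewrite /adjmx !mxE. Qed.

Lemma adjmxK m n (M : 'M[C]_(m,n)) : adjmx (adjmx M) = M.
Proof. by apply/matrixP=> i j; rewrite !adjmxE conjCK. Qed.

Lemma adjmx_mul m n p (A : 'M[C]_(m,n)) (B : 'M[C]_(n,p)) :
  adjmx (A *m B) = adjmx B *m adjmx A.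
Proof.
apply/matrixP=> i j; rewrite adjmxE !mxE rmorph_sum; apply: eq_bigr => k _.
by rewrite !adjmxE rmorphM mulrC.
Qed.

Lemma adjmxD m n (A B : 'M[C]_(m,n)) : adjmx (A + B) = adjmx A + adjmx B.
Proof. by apply/matrixP=> i j; rewrite [RHS]mxE !adjmxE mxE rmorphD. Qed.

Lemma adjmxN m n (A : 'M[C]_(m,n)) : adjmx (- A) = - adjmx A.
Proof. by apply/matrixP=> i j; rewrite [RHS]mxE !adjmxE mxE rmorphN. Qed.

Lemma adjmxB m n (A B : 'M[C]_(m,n)) : adjmx (A - B) = adjmx A - adjmx B.
Proof. by rewrite adjmxD adjmxN. Qed.

Lemma adjmx0 m n : adjmx (0 : 'M[C]_(m,n)) = 0.
Proof. by apply/matrixP=> i j; rewrite adjmxE !mxE rmorph0. Qed.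

Lemma adjmx1 n : adjmx (1%:M : 'M[C]_n) = 1%:M.
Proof. by apply/matrixP=> i j; rewrite adjmxE !mxE rmorph_nat eq_sym. Qed.

Lemma rc_real (c : R) : real_complex R c \is Num.real.
Proof. by apply/complex_realP; exists c. Qed.

Lemma conj_rc (c : R) : (real_complex R c)^* = real_complex R c.
Proof. by rewrite conj_Creal // rc_real. Qed.

Lemma adjmxZ m n (c : R) (A : 'M[C]_(m,n)) :
  adjmx (real_complex R c *: A) = real_complex R c *: adjmx A.
Proof. by apply/matrixP=> i j; rewrite [RHS]mxE !adjmxE mxE rmorphM /= conj_rc. Qed.

Lemma adjmx_sum (I : finType) m n (F : I -> 'M[C]_(m,n)) :
  adjmx (\sum_i F i) = \sum_i adjmx (F i).
Proof.
apply/matrixP=> a b; rewrite adjmxE !summxE rmorph_sum; apply: eq_bigr => k _.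
by rewrite adjmxE.
Qed.

Lemma adjmx_tens m n p q (A : 'M[C]_(m,n)) (B : 'M[C]_(p,q)) :
  adjmx (A *t B) = adjmx A *t adjmx B.
Proof. by apply/matrixP=> i j; rewrite adjmxE !mxE ?adjmxE rmorphM. Qed.

End Adj.

Section Psd.
Variable R : rcfType.
Local Notation C := (R[i]).

Lemma psd0 n : psdmx (0 : 'M[C]_n).
Proof. by split; [rewrite adjmx0|move=> v; rewrite mulmx0 mul0mx mxE]. Qed.

Lemma psdD n (A B : 'M[C]_n) : psdmx A -> psdmx B -> psdmx (A + B).
Proof.
move=> [hA qA] [hB qB]; split; first by rewrite adjmxD hA hB.
by move=> v; rewrite mulmxDr mulmxDl mxE addr_ge0.
Qed.

Lemma psdZ n (c : R) (A : 'M[C]_n) : 0 <= c -> psdmx A -> psdmx (real_complex R c *: A).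
Proof.
move=> c0 [hA qA]; split; first by rewrite adjmxZ hA.
move=> v; rewrite -scalemxAr -scalemxAl mxE mulr_ge0 //.
by rewrite ler0c.
Qed.

Lemma psd_sum (I : finType) (P : pred I) n (F : I -> 'M[C]_n) :
  (forall i, P i -> psdmx (F i)) -> psdmx (\sum_(i | P i) F i).
Proof.
move=> h; apply: (big_ind (@psdmx R n)); [exact: psd0|exact: psdD|exact: h].
Qed.

Lemma psd_congr k n (M : 'M[C]_k) (B : 'M[C]_(k, n)) :
  psdmx M -> psdmx (adjmx B *m M *m B).
Proof.
move=> [hM qM]; split; first by rewrite !adjmx_mul adjmxK hM mulmxA.
move=> v; have := qM (v *m adjmx B).
by rewrite adjmx_mul adjmxK !mulmxA.
Qed.

Lemma psd_cast m n (e : m = n) (M : 'M[C]_m) : psdmx M -> psdmx (castmx (e, e) M).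
Proof. by case: n / e; rewrite castmx_id. Qed.

End Psd.

Section Tens.
Variable R : rcfType.
Local Notation C := (R[i]).

Lemma tensmxDl m n p q (A B : 'M[C]_(m,n)) (M : 'M[C]_(p,q)) :
  (A + B) *t M = A *t M + B *t M.
Proof. by apply/matrixP=> i j; rewrite !mxE mulrDl. Qed.

Lemma tensmxDr m n p q (A : 'M[C]_(m,n)) (M N : 'M[C]_(p,q)) :
  A *t (M + N) = A *t M + A *t N.
Proof. by apply/matrixP=> i j; rewrite !mxE mulrDr. Qed.

Lemma tensmxNl m n p q (A : 'M[C]_(m,n)) (M : 'M[C]_(p,q)) :
  (- A) *t M = - (A *t M).
Proof. by apply/matrixP=> i j; rewrite !mxE mulNr. Qed.

Lemma tensmxNr m n p q (A : 'M[C]_(m,n)) (M : 'M[C]_(p,q)) :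
  A *t (- M) = - (A *t M).
Proof. by apply/matrixP=> i j; rewrite !mxE mulrN. Qed.

Lemma tensmxZl m n p q (c : C) (A : 'M[C]_(m,n)) (M : 'M[C]_(p,q)) :
  (c *: A) *t M = c *: (A *t M).
Proof. by apply/matrixP=> i j; rewrite !mxE mulrA. Qed.

Lemma tensmxZr m n p q (c : C) (A : 'M[C]_(m,n)) (M : 'M[C]_(p,q)) :
  A *t (c *: M) = c *: (A *t M).
Proof. by apply/matrixP=> i j; rewrite !mxE mulrCA. Qed.

Lemma tensmx_suml (I : finType) m n p q (F : I -> 'M[C]_(m,n)) (M : 'M[C]_(p,q)) :
  (\sum_i F i) *t M = \sum_i (F i *t M).
Proof.
apply/matrixP=> a b; rewrite !mxE !summxE mulr_suml; apply: eq_bigr => k _.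
by rewrite !mxE.
Qed.

Lemma tensmx_sumr (I : finType) m n p q (A : 'M[C]_(m,n)) (F : I -> 'M[C]_(p,q)) :
  A *t (\sum_i F i) = \sum_i (A *t F i).
Proof.
apply/matrixP=> a b; rewrite !mxE !summxE mulr_sumr; apply: eq_bigr => k _.
by rewrite !mxE.
Qed.

Lemma tens11 m n : (1%:M : 'M[C]_m) *t (1%:M : 'M[C]_n) = 1%:M.
Proof.
apply/matrixP=> i j.
case: (mxtens_indexP i)=> i0 i1; case: (mxtens_indexP j)=> j0 j1.
rewrite tensmxE !mxE.
have -> : (mxtens_index (i0, i1) == mxtens_index (j0, j1)) = ((i0, i1) == (j0, j1)).
  apply/eqP/eqP=> [h|->] //.
  by rewrite -(mxtens_indexK (i0, i1)) h mxtens_indexK.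
by rewrite xpair_eqE; case: (i0 == j0); case: (i1 == j1); rewrite ?mulr1 ?mulr0 ?mul0r.
Qed.

Lemma tensmxA m n p (A : 'M[C]_m) (B : 'M[C]_n) (D : 'M[C]_p) :
  castmx (mulnA m n p, mulnA m n p) (A *t (B *t D)) = (A *t B) *t D.
Proof.
apply/matrixP=> i j.
case: (mxtens_indexP i)=> i0 i1; case: (mxtens_indexP j)=> j0 j1.
case: (mxtens_indexP i0)=> a b; case: (mxtens_indexP j0)=> a' b'.
rewrite castmxE !tensmxE.
have E : forall (x : 'I_m) (y : 'I_n) (z : 'I_p),
   cast_ord (esym (mulnA m n p)) (mxtens_index (mxtens_index (x, y), z))
   = mxtens_index (x, mxtens_index (y, z)).
  by move=> x y z; apply: val_inj => /=; rewrite mulnDl -mulnA addnA.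
by rewrite !E !tensmxE mulrA.
Qed.

Lemma psd_tens1_1 n (M : 'M[C]_n) : psdmx M -> psdmx ((1%:M : 'M[C]_1) *t M).
Proof. by move=> h; rewrite tens_scalar1mx; apply: psd_cast. Qed.

Lemma psd_tens1 r n (M : 'M[C]_n) : psdmx M -> psdmx ((1%:M : 'M[C]_r) *t M).
Proof.
move=> h; rewrite mx1_sum_delta tensmx_suml; apply: psd_sum => i _.
have -> : (delta_mx i i : 'M[C]_r) = adjmx (delta_mx 0 i : 'M[C]_(1,r)) *m delta_mx 0 i.
  rewrite /adjmx map_delta_mx ?rmorph0 ?rmorph1 //.
  by rewrite trmx_delta mul_delta_mx.
have -> : (adjmx (delta_mx 0 i : 'M[C]_(1,r)) *m delta_mx 0 i) *t M
   = adjmx ((delta_mx 0 i : 'M[C]_(1,r)) *t (1%:M : 'M[C]_n)) *m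
       ((1%:M : 'M[C]_1) *t M) *m ((delta_mx 0 i : 'M[C]_(1,r)) *t (1%:M : 'M[C]_n)).
  by rewrite adjmx_tens adjmx1 !tensmx_mul mulmx1 mul1mx mulmx1.
by apply: psd_congr; apply: psd_tens1_1.
Qed.

Lemma psd_gram_tens r k n (B : 'M[C]_(r, k)) (M : 'M[C]_n) :
  psdmx M -> psdmx ((adjmx B *m B) *t M).
Proof.
move=> h.
have -> : (adjmx B *m B) *t M
   = adjmx (B *t (1%:M : 'M[C]_n)) *m ((1%:M : 'M[C]_r) *t M) *m (B *t (1%:M : 'M[C]_n)).
  by rewrite adjmx_tens adjmx1 !tensmx_mul mulmx1 mul1mx mulmx1.
by apply: psd_congr; apply: psd_tens1.
Qed.

End Tens.

Section Core.
Variable R : rcfType.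
Local Notation C := (R[i]).
Local Notation rc := (real_complex R).

Lemma castmxB m n (e : m = n) (A B : 'M[C]_m) :
  castmx (e, e) A - castmx (e, e) B = castmx (e, e) (A - B).
Proof. by case: n / e; rewrite !castmx_id. Qed.

Lemma proj_gram n k (U : 'M[C]_(k, n)) : U *m adjmx U = 1%:M ->
  1%:M - adjmx U *m U = adjmx (1%:M - adjmx U *m U) *m (1%:M - adjmx U *m U).
Proof.
move=> hU.
have PP : (adjmx U *m U) *m (adjmx U *m U) = adjmx U *m U.
  by rewrite mulmxA -(mulmxA (adjmx U)) hU mulmx1.
rewrite adjmxB adjmx1 adjmx_mul adjmxK.
by rewrite mulmxBr mulmx1 mulmxBl mul1mx PP subrr subr0.
Qed.

Lemma core_term dA dB dC k (U : 'M[C]_(k, dA)) (w c : R)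
   (sig : 'M[C]_dC) (rho : 'M[C]_(dB * dC)) :
  U *m adjmx U = 1%:M -> 0 <= w -> 0 <= c -> psdmx sig ->
  psdmx (rc c *: ((1%:M : 'M[C]_dB) *t sig) - rho) ->
  psdmx (rc (w * c) *: ((1%:M : 'M[C]_dA) *t ((1%:M : 'M[C]_dB) *t sig))
         - rc w *: ((adjmx U *m U) *t rho)).
Proof.
move=> hU w0 c0 hs hr.
set X := (1%:M : 'M[C]_dB) *t sig.
set P := adjmx U *m U.
have -> : rc (w * c) *: ((1%:M : 'M[C]_dA) *t X) - rc w *: (P *t rho)
   = rc w *: ((1%:M - P) *t (rc c *: X) + P *t (rc c *: X - rho)).
  rewrite rmorphM -scalerA -tensmxZr -scalerBr; congr (_ *: _).
  rewrite tensmxDl tensmxNl tensmxDr tensmxNr.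
  by rewrite addrA subrK.
apply: psdZ => //; apply: psdD.
  rewrite /P (proj_gram _ _ _ hU); apply: psd_gram_tens.
  by apply: psdZ => //; apply: psd_tens1.
exact: psd_gram_tens.
Qed.

End Core.

Section Core2.
Variable R : rcfType.
Local Notation C := (R[i]).
Local Notation rc := (real_complex R).

Lemma core dA dB dC J (d : 'I_J.+1 -> nat) (U : forall j : 'I_J.+1, 'M[C]_(d j, dA))
  (p c : 'I_J.+1 -> R) (rho : 'I_J.+1 -> 'M[C]_(dB * dC)) (sig : 'I_J.+1 -> 'M[C]_dC) :
  (forall j, U j *m adjmx (U j) = 1%:M) ->
  (forall j, 0 <= p j) -> (forall j, 0 <= c j) -> (forall j, psdmx (sig j)) ->
  (forall j, p j = 0 \/ psdmx (rc (c j) *: ((1%:M : 'M[C]_dB) *t sig j) - rho j)) ->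
  psdmx ((1%:M : 'M[C]_(dA * dB)) *t (\sum_j rc (p j / (d j)%:R * c j) *: sig j)
     - castmx (mulnA dA dB dC, mulnA dA dB dC)
        (\sum_j rc (p j) *: ((rc ((d j)%:R^-1) *: (adjmx (U j) *m U j)) *t rho j))).
Proof.
move=> hU p0 c0 hs hr.
rewrite -tens11 -tensmxA castmxB; apply: psd_cast.
rewrite tensmx_sumr tensmx_sumr -sumrB; apply: psd_sum => j _.
rewrite !tensmxZr tensmxZl scalerA -[rc (p j) * _]rmorphM.
case: (hr j) => [pj0|hj].
  by rewrite pj0 !mul0r !rmorph0 !scale0r subrr; apply: psd0.
apply: core_term => //.
by apply: divr_ge0 => //; apply: ler0n.
Qed.

End Core2.

Section Analytic.
Variable R : realType.
Local Notation rc := (real_complex R).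

Lemma ln2_gt0 : 0 < ln (2 : R).
Proof. by apply: ln_gt0; rewrite ltr1n. Qed.

Lemma pow2E (y : R) : powR 2 y = sequences.expR (y * ln 2).
Proof. by rewrite /powR pnatr_eq0. Qed.

Lemma pow2_lt (y z : R) : (powR 2 y < powR 2 z) = (y < z).
Proof. by rewrite !pow2E ltr_expR ltr_pM2r // ln2_gt0. Qed.

Lemma pow2_le (y z : R) : (powR 2 y <= powR 2 z) = (y <= z).
Proof. by rewrite !pow2E ler_expR ler_pM2r // ln2_gt0. Qed.

Lemma pow2_log (t : R) : 0 < t -> powR 2 (ln t / ln 2) = t.
Proof.
move=> t0; rewrite pow2E mulfVK; last by rewrite gt_eqF // ln2_gt0.
by rewrite lnK // posrE.
Qed.

Lemma pow2_gt0 (y : R) : 0 < powR 2 y.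
Proof. by rewrite pow2E expR_gt0. Qed.

Lemma Hmin_ge m n (rho : 'M[R[i]]_(m * n)) (sigma : 'M[R[i]]_n) (lam : R) :
  density sigma ->
  psdmx (rc (powR 2 (- lam)) *: ((1%:M : 'M[R[i]]_m) *t sigma) - rho) ->
  (lam%:E <= Hmin m n rho)%E.
Proof.
move=> ds hp; rewrite /Hmin.
apply: (@le_trans _ _ (ereal_sup [set (lam0%:E)%E | lam0 in
        [set lam0 : R | psdmx (rc (powR 2 (- lam0)) *:
                                 ((1%:M : 'M[R[i]]_m) *t sigma) - rho)]])).
  by apply: ereal_sup_ubound; exists lam.
by apply: ereal_sup_ubound; exists sigma.
Qed.

Lemma LHS_bound m n (rho : 'M[R[i]]_(m * n)) (sigma : 'M[R[i]]_n) (lam : R) :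
  density sigma ->
  psdmx (rc (powR 2 (- lam)) *: ((1%:M : 'M[R[i]]_m) *t sigma) - rho) ->
  (exp2neg (Hmin m n rho) <= (powR 2 (- lam))%:E)%E.
Proof.
move=> ds hp; have := Hmin_ge _ _ _ _ _ ds hp.
case: (Hmin m n rho) => [r| |] //=.
- by rewrite !lee_fin pow2_le lerN2.
Qed.

Lemma approx m n (rho : 'M[R[i]]_(m * n)) (t : R) : 0 < t ->
  (exp2neg (Hmin m n rho) < t%:E)%E ->
  exists sigma lam, [/\ density sigma,
    psdmx (rc (powR 2 (- lam)) *: ((1%:M : 'M[R[i]]_m) *t sigma) - rho)
    & powR 2 (- lam) < t].
Proof.
move=> t0 ht.
set x := - (ln t / ln 2).
have hx : ((x%:E) < Hmin m n rho)%E.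
  move: ht; case: (Hmin m n rho) => [r| |] //=.
  - rewrite lte_fin -{1}(pow2_log t t0) pow2_lt => h.
    by rewrite lte_fin /x ltrNl.
  - by move=> _; apply: ltry.
move: hx; rewrite /Hmin => /ereal_sup_gt [y [sigma ds <-]] /ereal_sup_gt [z [lam hl <-]].
rewrite lte_fin => xl.
exists sigma, lam; split => //.
by rewrite -(pow2_log t t0) pow2_lt ltrNl.
Qed.

End Analytic.

Lemma psd1 (R : rcfType) n : psdmx (1%:M : 'M[R[i]]_n).
Proof.
split; first exact: adjmx1.
by move=> v; rewrite mulmx1 mxE; apply: sumr_ge0 => k _; rewrite adjmxE mul_conjC_ge0.
Qed.

Lemma exp2neg_ge0 (R : realType) (x : \bar R) : (0 <= exp2neg x)%E.
Proof. by case: x => [r| |] //=; rewrite lee_fin powR_ge0. Qed.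


Lemma ereal_part (R : realType) J (w : 'I_J.+1 -> R) (E : 'I_J.+1 -> \bar R)
  (L : \bar R) (Q : 'I_J.+1 -> R -> Prop) :
  (forall j, 0 <= w j) -> (forall j, (0 <= E j)%E) -> \sum_j w j <= 1 ->
  (forall c : 'I_J.+1 -> R, (forall j, 0 <= c j) ->
      (forall j, 0 < w j -> 0 < c j /\ Q j (c j)) ->
      (L <= (\sum_j w j * c j)%:E)%E) ->
  (forall j t, 0 < t -> (E j < t%:E)%E -> exists c, [/\ 0 < c, Q j c & c < t]) ->
  (L <= \sum_j (w j)%:E * E j)%E.
Proof.
move=> w0 E0 sw hL hE.
have [[j [wj Ej]]|B] := pselect (exists j, 0 < w j /\ E j = +oo%E).
  apply: le_trans (leey _) _; rewrite (bigD1 j) //= Ej muleC gt0_mulye ?lte_fin //.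
  apply: leeDl; apply: sume_ge0 => i _; apply: mule_ge0 => //.
  by rewrite lee_fin.
have Efin j : 0 < w j -> E j = (fine (E j))%:E.
  move=> wj; have Ej : E j != +oo%E by apply/eqP => h; apply: B; exists j.
  by rewrite fineK // ge0_fin_numE // ltey.
have -> : (\sum_j (w j)%:E * E j)%E = (\sum_j w j * fine (E j))%:E.
  rewrite -sumEFin; apply: eq_bigr => j _.
  have := w0 j; rewrite le_eqVlt => /predU1P [<-|wj]; first by rewrite mul0e mul0r.
  by rewrite {1}(Efin j wj) EFinM.
apply/lee_addgt0Pr => e e0.
have hc : forall j, exists c : R, 0 <= c /\ (0 < w j -> [/\ 0 < c, Q j c & c < fine (E j) + e]).
  move=> j; have := w0 j; rewrite le_eqVlt => /predU1P [wj|wj].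
    by exists 1; split => // h; rewrite -wj ltxx in h.
  have t0 : 0 < fine (E j) + e by apply: ltr_wpDl => //; apply: fine_ge0; exact: E0.
  have hlt : (E j < (fine (E j) + e)%:E)%E by rewrite (Efin j wj) lte_fin ltrDl.
  have [c [c0 qc ct]] := hE j _ t0 hlt.
  by exists c; split; [exact: ltW | by []].
case: (choice hc) => c hc'.
apply: le_trans (hL c _ _) _.
- by move=> j; case: (hc' j).
- by move=> j wj; case: (hc' j) => _ /(_ wj) [].
rewrite -EFinD lee_fin.
apply: (@le_trans _ _ (\sum_j w j * (fine (E j) + e))).
  apply: ler_sum => j _; have := w0 j; rewrite le_eqVlt => /predU1P [<-|wj].
    by rewrite !mul0r.
  by case: (hc' j) => cj0 /(_ wj) [_ _ /ltW h]; apply: ler_pM => //; exact: w0.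
rewrite (eq_bigr (fun j => w j * fine (E j) + w j * e)); last by move=> j _; rewrite mulrDr.
rewrite big_split /= lerD2l -mulr_suml.
by rewrite ler_piMl // ltW.
Qed.


Theorem mainTheorem6 (R : realType) (dA dB dC J : nat)
  (d : 'I_J.+1 -> nat) (U : forall j : 'I_J.+1, 'M[R[i]]_(d j, dA))
  (p : 'I_J.+1 -> R) (rho : 'I_J.+1 -> 'M[R[i]]_(dB * dC)) :
  (forall j, (0 < d j)%N) ->
  (forall j, U j *m adjmx (U j) = 1%:M) ->
  (forall j k, j != k -> U j *m adjmx (U k) = 0) ->
  (forall j, 0 <= p j) -> \sum_j p j = 1 ->
  (forall j, density (rho j)) ->
  let pi := fun j => real_complex R ((d j)%:R^-1) *: (adjmx (U j) *m U j) in
  let Lambda : 'M[R[i]]_(dA * dB * dC) :=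
    castmx (mulnA dA dB dC, mulnA dA dB dC)
      (\sum_j real_complex R (p j) *: (pi j *t rho j)) in
  (exp2neg (Hmin (dA * dB) dC Lambda)
    <= \sum_j ((p j / (d j)%:R)%:E * exp2neg (Hmin dB dC (rho j))))%E.
Proof.
move=> hd hU _ hp hsum hrho; cbv beta zeta.
have dpos j : 0 < ((d j)%:R : R) by rewrite ltr0n.
have w0 j : 0 <= p j / (d j)%:R by apply: divr_ge0 => //; apply: ler0n.
have wp j : p j / (d j)%:R <= p j by rewrite ler_pdivrMr // ler_peMr // ler1n.
have w0p j : p j / (d j)%:R = 0 -> p j = 0.
  by move=> /eqP; rewrite mulf_eq0 invr_eq0 (gt_eqF (dpos j)) orbF => /eqP.
apply: (@ereal_part R J (fun j => p j / (d j)%:R)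
   (fun j => exp2neg (Hmin dB dC (rho j))) _
   (fun j c => exists s, density s /\
       psdmx (real_complex R c *: ((1%:M : 'M[R[i]]_dB) *t s) - rho j))).
all: try (move=> j; apply: exp2neg_ge0).
all: try exact: w0.
- apply: (@le_trans _ _ (\sum_j p j)); last by rewrite hsum.
  by apply: ler_sum => j _; exact: wp.
- move=> c c0 hc.
  have dC0 : (0 < dC)%N.
    rewrite lt0n; apply/eqP => dC0.
    have h1 := (hrho ord0).2.
    have : \tr (rho ord0) = 0.
      rewrite /mxtrace big1 // => i _; exfalso.
      have h : (dB * dC = 0)%N by rewrite dC0 muln0.
      by move: (nat_of_ord i) (ltn_ord i) => x; rewrite h.
    by rewrite h1 => /eqP; rewrite oner_eq0.
  pose s0 : 'M[R[i]]_dC := real_complex R ((dC%:R)^-1) *: 1%:M.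
  have ds0 : density s0.
    split; first by apply: psdZ; [rewrite invr_ge0 ler0n | apply: psd1].
    rewrite mxtraceZ mxtrace1 -(rmorph_nat (real_complex R)) -rmorphM mulVf ?rmorph1 //.
    by rewrite pnatr_eq0 -lt0n.
  have hs j : exists s, density s /\ (p j = 0 \/
      psdmx (real_complex R (c j) *: ((1%:M : 'M[R[i]]_dB) *t s) - rho j)).
    have := w0 j; rewrite le_eqVlt => /predU1P [wj|wj].
      by exists s0; split => //; left; apply: w0p; rewrite wj.
    by case: (hc j wj) => _ [s [ds hps]]; exists s; split => //; right.
  case: (choice hs) => sig hsig.
  have [[j0 pj0]|hn] := pselect (exists j, 0 < p j); last first.
    exfalso; have : \sum_j p j = 0.
      apply: big1 => j _; apply/eqP; rewrite eq_le hp andbT leNgt; apply/negP => h.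
      by apply: hn; exists j.
    by rewrite hsum => /eqP; rewrite oner_eq0.
  set N := \sum_j p j / (d j)%:R * c j.
  have wj0 : 0 < p j0 / (d j0)%:R by apply: divr_gt0.
  have Npos : 0 < N.
    rewrite /N (bigD1 j0) //=.
    apply: (lt_le_trans (mulr_gt0 wj0 (hc j0 wj0).1)); rewrite lerDl.
    by apply: sumr_ge0 => j _; apply: mulr_ge0.
  pose sigma := real_complex R (N^-1) *:
      \sum_j real_complex R (p j / (d j)%:R * c j) *: sig j.
  have dsig : density sigma.
    split.
      apply: psdZ; first by rewrite invr_ge0 ltW.
      apply: psd_sum => j _; apply: psdZ; first by apply: mulr_ge0.
      exact: (hsig j).1.1.
    rewrite /sigma mxtraceZ raddf_sum /=.
    rewrite (eq_bigr (fun j => real_complex R (p j / (d j)%:R * c j))); last first.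
      by move=> j _; rewrite mxtraceZ (hsig j).1.2 mulr1.
    by rewrite -rmorph_sum -/N -rmorphM mulVf ?rmorph1 // gt_eqF.
  apply: le_trans (LHS_bound _ _ _ _ sigma (- (ln N / ln 2)) dsig _) _.
    rewrite opprK pow2_log // /sigma tensmxZr scalerA -rmorphM mulfV ?gt_eqF // rmorph1 scale1r.
    apply: core => //; first by move=> j; exact: (hsig j).1.1.
    by move=> j; exact: (hsig j).2.
  by rewrite opprK pow2_log.
- move=> j t t0 ht.
  have [s [lam [ds hps lt]]] := approx _ _ _ _ _ t0 ht.
  exists (powR 2 (- lam)); split; [exact: pow2_gt0 | | exact: lt].
  by exists s.
Qed.
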